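(* Let $h:\mathbb{R}^p\times[t_0,t_f)\to\mathbb{R}$ be a CBF for the first-order system $\dot{\mathbf{p}}=\mathbf{f}(\mathbf{p})+\mathbf{G}(\mathbf{p})\mathbf{z}$ on a set-valued flow $\mathcal{D}:[t_0,t_f)\rightrightarrows\mathbb{R}^p$, and let $\mathbf{k}:\mathbb{R}^p\times[t_0,t_f)\to\mathbb{R}^z$ be continuously differentiable with $\dot h(\mathbf{p},t,\mathbf{k}(\mathbf{p},t))>-\alpha(h(\mathbf{p},t))$ for all $(\mathbf{p},t)\in\mathcal{G}(\mathcal{D})$, where $\alpha$ is an extended class-$\mathcal{K}_\infty$ function. For $\sigma>0$ define $h_1:\mathbb{R}^p\times\mathbb{R}^z\times[t_0,t_f)\to\mathbb{R}$ by $h_1(\mathbf{p},\mathbf{z},t)=h(\mathbf{p},t)-\frac{1}{2\sigma}\|\mathbf{z}-\mathbf{k}(\mathbf{p},t)\|^2$. Then $h_1$ is a CBF for the second-order system $\dot{\mathbf{p}}=\mathbf{f}(\mathbf{p})+\mathbf{G}(\mathbf{p})\mathbf{z}$, $\dot{\mathbf{z}}=\mathbf{f}_1(\mathbf{p},\mathbf{z})+\mathbf{G}_1(\mathbf{p},\mathbf{z})\mathbf{u}$, with any associated extended class-$\mathcal{K}_\infty$ function $\alpha_1$ satisfying $\alpha_1(s)\ge\alpha(s)$ for all $s\in\mathbb{R}$.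
   Context: First-order model: $\dot{\mathbf{p}}=\mathbf{f}(\mathbf{p})+\mathbf{G}(\mathbf{p})\mathbf{z}$, $\mathbf{p}\in\mathbb{R}^p$, $\mathbf{z}\in\mathbb{R}^z$, $\mathbf{f},\mathbf{G}$ locally Lipschitz, $\mathbf{G}(\mathbf{p})$ full row rank for all $\mathbf{p}$. Second-order strict-feedback model: state $(\mathbf{p},\mathbf{z})$, input $\mathbf{u}\in\mathbb{R}^m$, with additionally $\mathbf{f}_1:\mathbb{R}^p\times\mathbb{R}^z\to\mathbb{R}^z$, $\mathbf{G}_1:\mathbb{R}^p\times\mathbb{R}^z\to\mathbb{R}^{z\times m}$ locally Lipschitz and $\mathbf{G}_1(\mathbf{p},\mathbf{z})$ of full row rank for all $(\mathbf{p},\mathbf{z})$. A continuous $\alpha:\mathbb{R}\to\mathbb{R}$ is extended class-$\mathcal{K}_\infty$ if strictly increasing, $\alpha(0)=0$, $\lim_{s\to\pm\infty}\alpha(s)=\pm\infty$. Graph of a set-valued flow $\mathcal{D}$: $\mathcal{G}(\mathcal{D})=\{(\mathbf{x},t):\mathbf{x}\in\mathcal{D}(t)\}$. CBF definition (for a control-affine system $\dot{\mathbf{x}}=\mathbf{F}(\mathbf{x})+\mathbf{B}(\mathbf{x})\mathbf{v}$ with state $\mathbf{x}\in\mathbb{R}^n$, input $\mathbf{v}$): a continuously differentiable $h:\mathbb{R}^n\times[t_0,t_f)\to\mathbb{R}$ with $\frac{\partial}{\partial\mathbf{x}}h\ne\mathbf{0}$ whenever $h=0$, and $\mathcal{C}(t)=\{\mathbf{x}:h(\mathbf{x},t)\ge0\}$,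 is a CBF on the set-valued flow $\mathcal{D}$ (with $\mathcal{C}(t)\subseteq\mathcal{D}(t)$ for all $t$) with associated extended class-$\mathcal{K}_\infty$ function $\alpha$ if for all $(\mathbf{x},t)\in\mathcal{G}(\mathcal{D})$, $\sup_{\mathbf{v}}\dot h(\mathbf{x},t,\mathbf{v})>-\alpha(h(\mathbf{x},t))$, where $\dot h(\mathbf{x},t,\mathbf{v})=\frac{\partial h}{\partial\mathbf{x}}(\mathbf{F}(\mathbf{x})+\mathbf{B}(\mathbf{x})\mathbf{v})+\frac{\partial h}{\partial t}$. For the first-order model, $\dot h(\mathbf{p},t,\mathbf{z})=\frac{\partial h}{\partial\mathbf{p}}(\mathbf{f}(\mathbf{p})+\mathbf{G}(\mathbf{p})\mathbf{z})+\frac{\partial h}{\partial t}$; ''CBF for the second-order system'' means this definition with $\mathbf{x}=(\mathbf{p},\mathbf{z})$ and input $\mathbf{u}$ (existence of some suitable flow $\mathcal{D}_1$). *)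

(* Defs.v *)
From HB Require Import structures.
From mathcomp Require Import all_boot all_order all_algebra.
From mathcomp Require Import all_classical all_reals all_analysis.
Set Implicit Arguments. Unset Strict Implicit. Unset Printing Implicit Defensive.
Import Order.TTheory GRing.Theory Num.Theory.
Import numFieldNormedType.Exports.
Local Open Scope classical_set_scope.
Local Open Scope ring_scope.

Section CBF.
Variable R : realType.

Definition sqnorm (n : nat) (v : 'cV[R]_n) : R := \sum_(i < n) (v i 0) ^+ 2.

Definition in_time (t0 : R) (tf : \bar R) (t : R) : Prop := t0 <= t /\ (t%:E < tf)%E.

Definition uncurry2 (n : nat) (V : normedModType R) (h : 'cV[R]_n -> R -> V)
  : 'cV[R]_n * R -> V := fun xt => h xt.1 xt.2.

Definition C1_on (n : nat) (V : normedModType R) (t0 : R) (tf : \bar R)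
  (h : 'cV[R]_n -> R -> V) : Prop :=
  (forall x t, in_time t0 tf t -> differentiable (uncurry2 h) (x, t)) /\
  (forall (w : 'cV[R]_n) (s : R),
     {within [set xt : 'cV[R]_n * R | in_time t0 tf xt.2],
       continuous (fun xt => 'd (uncurry2 h) xt (w, s))}).

Definition dhdx (n : nat) (h : 'cV[R]_n -> R -> R) x t (w : 'cV[R]_n) : R :=
  'd (uncurry2 h) (x, t) (w, 0).
Definition dhdt (n : nat) (h : 'cV[R]_n -> R -> R) x t : R :=
  'd (uncurry2 h) (x, t) (0, 1).

Definition hdot (n m : nat) (F : 'cV[R]_n -> 'cV[R]_n) (B : 'cV[R]_n -> 'M[R]_(n, m))
  (h : 'cV[R]_n -> R -> R) x t (v : 'cV[R]_m) : R :=
  dhdx h x t (F x + B x *m v) + dhdt h x t.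

Definition ext_classKinf (alpha : R -> R) : Prop :=
  continuous alpha /\ {homo alpha : s1 s2 / s1 < s2} /\ alpha 0 = 0 /\
  (alpha x @[x --> +oo] --> +oo) /\ (alpha x @[x --> -oo] --> -oo).

Definition graph (n : nat) (t0 : R) (tf : \bar R) (D : R -> set 'cV[R]_n)
  : set ('cV[R]_n * R) := [set xt | in_time t0 tf xt.2 /\ D xt.2 xt.1].

Definition safe_set (n : nat) (h : 'cV[R]_n -> R -> R) (t : R) : set 'cV[R]_n :=
  [set x | 0 <= h x t].

Definition is_CBF (n m : nat) (F : 'cV[R]_n -> 'cV[R]_n) (B : 'cV[R]_n -> 'M[R]_(n, m))
  (t0 : R) (tf : \bar R) (h : 'cV[R]_n -> R -> R) (D : R -> set 'cV[R]_n)
  (alpha : R -> R) : Prop :=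
  C1_on t0 tf h /\
  (forall x t, in_time t0 tf t -> h x t = 0 -> exists w, dhdx h x t w != 0) /\
  (forall t, in_time t0 tf t -> safe_set h t `<=` D t) /\
  ext_classKinf alpha /\
  (forall x t, graph t0 tf D (x, t) ->
     (- alpha (h x t))%:E < ereal_sup [set (hdot F B h x t v)%:E | v in [set: 'cV[R]_m]])%E.

(* local Lipschitz continuity (any norm; all equivalent in finite dimension) *)
Definition loc_lipschitz (X Y : normedModType R) (g : X -> Y) : Prop :=
  forall x0 : X, exists r : R, 0 < r /\ exists L : R,
    forall y1 y2 : X, `|y1 - x0| < r -> `|y2 - x0| < r -> `|g y1 - g y2| <= L * `|y1 - y2|.

(* second-order strict-feedback system in the state x = (p, z) = col_mx p z *)
Definition F2 (p z : nat) (f : 'cV[R]_p -> 'cV[R]_p) (G : 'cV[R]_p -> 'M[R]_(p, z))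
  (f1 : 'cV[R]_p -> 'cV[R]_z -> 'cV[R]_z) (x : 'cV[R]_(p + z)) : 'cV[R]_(p + z) :=
  col_mx (f (usubmx x) + G (usubmx x) *m dsubmx x) (f1 (usubmx x) (dsubmx x)).
Definition B2 (p z m : nat) (G1 : 'cV[R]_p -> 'cV[R]_z -> 'M[R]_(z, m))
  (x : 'cV[R]_(p + z)) : 'M[R]_(p + z, m) :=
  col_mx 0 (G1 (usubmx x) (dsubmx x)).

Definition h1 (p z : nat) (sigma : R) (h : 'cV[R]_p -> R -> R)
  (k : 'cV[R]_p -> R -> 'cV[R]_z) (x : 'cV[R]_(p + z)) (t : R) : R :=
  h (usubmx x) t - 1 / (2 * sigma) * sqnorm (dsubmx x - k (usubmx x) t).

End CBF.

(* Main.v *)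
Require Import Defs.
From HB Require Import structures.
From mathcomp Require Import all_boot all_order all_algebra.
From mathcomp Require Import all_classical all_reals all_analysis.
From mathcomp Require Import ring lra.
Import Order.TTheory GRing.Theory Num.Theory.
Import numFieldNormedType.Exports.
Local Open Scope classical_set_scope.
Local Open Scope ring_scope.

Lemma is_diff_linfun (R : realType) (V W : normedModType R) (f : V -> W) (x : V) :
  linear f -> continuous f -> is_diff x f f.
Proof.
move=> lf cf.
pose fM := GRing.isLinear.Build _ _ _ _ _ lf.
pose fL : {linear V -> W} := HB.pack f fM.
have -> : f = fL by [].
apply: DiffDef; first exact/linear_differentiable.
by rewrite diff_lin.
Qed.

Lemma continuous_usubmx' (R : realType) m1 m2 n :
  continuous (usubmx : 'M[R]_(m1 + m2, n) -> 'M[R]_(m1, n)).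
Proof.
move=> u A /nbhs_ballP[e /= e0 eA].
apply/nbhs_ballP; exists e => //= v [_ uv]; apply: eA; split => // i j.
by apply: (le_lt_trans _ (uv (lshift m2 i) j)); rewrite !mxE.
Qed.

Lemma continuous_dsubmx' (R : realType) m1 m2 n :
  continuous (dsubmx : 'M[R]_(m1 + m2, n) -> 'M[R]_(m2, n)).
Proof.
move=> u A /nbhs_ballP[e /= e0 eA].
apply/nbhs_ballP; exists e => //= v [_ uv]; apply: eA; split => // i j.
by apply: (le_lt_trans _ (uv (rshift m1 i) j)); rewrite !mxE.
Qed.

Lemma is_diff_ext (R : realType) (V W : normedModType R) (f g df dg : V -> W) (x : V) :
  is_diff x f df -> f = g -> df = dg -> is_diff x g dg.
Proof. by move=> H <- <-. Qed.

Lemma is_diff_sum' (R : realType) (V W : normedModType R) n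
  (F dF : 'I_n -> V -> W) (x : V) :
  (forall i, is_diff x (F i) (dF i)) ->
  is_diff x (fun y => \sum_(i < n) F i y) (fun d => \sum_(i < n) dF i d).
Proof.
elim: n F dF => [|n IH] F dF HF.
  have H0 := is_diff_cst (0 : W) x.
  eapply is_diff_ext; first exact: H0.
    by apply/funext => y; rewrite big_ord0.
  by apply/funext => y; rewrite big_ord0.
have H1 := IH (fun i => F (widen_ord (leqnSn n) i)) (fun i => dF (widen_ord (leqnSn n) i))
  (fun i => HF _).
have H2 := is_diffD H1 (HF ord_max).
eapply is_diff_ext; first exact: H2; apply/funext => y; by rewrite big_ord_recr.
Qed.

Lemma is_diff_coord (R : realType) m n (i : 'I_m) (j : 'I_n) (x : 'M[R]_(m, n)) :
  is_diff x (fun N : 'M[R]_(m, n) => N i j) (fun N => N i j).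
Proof.
apply: is_diff_linfun; last exact: coord_continuous.
by move=> a u v; rewrite !mxE.
Qed.

Lemma is_diff_sqnorm (R : realType) (V : normedModType R) n (g dg : V -> 'cV[R]_n) (x : V) :
  is_diff x g dg ->
  is_diff x (fun y => sqnorm (g y)) (fun d => \sum_(i < n) (2 * (g x i 0 * dg d i 0))).
Proof.
move=> Hg.
apply: is_diff_sum' => i.
have Hc : is_diff x (fun y => g y i 0) (fun d => dg d i 0).
  by eapply is_diff_ext; first exact: (is_diff_comp Hg (is_diff_coord _ _ _ i 0 (g x))).
have := is_diffM Hc Hc.
move=> H; eapply is_diff_ext; first exact: H; apply/funext => y /=.
  by rewrite expr2.
by rewrite mulr2n mulrDl !mul1r.
Qed.

Definition piP {R : realType} {p z : nat} (xt : 'cV[R]_(p + z) * R) : 'cV[R]_p * R :=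
  (usubmx xt.1, xt.2).
Definition rhoZ {R : realType} {p z : nat} (xt : 'cV[R]_(p + z) * R) : 'cV[R]_z :=
  dsubmx xt.1.

Lemma continuous_piP (R : realType) (p z : nat) : continuous (@piP R p z).
Proof.
move=> x; apply: (@cvg_pair _ _ _ _ (nbhs (usubmx x.1)) (nbhs x.2)).
  apply: continuous_comp; [exact: cvg_fst | exact: continuous_usubmx'].
exact: cvg_snd.
Qed.

Lemma continuous_rhoZ (R : realType) (p z : nat) : continuous (@rhoZ R p z).
Proof.
move=> x; apply: continuous_comp; [exact: cvg_fst | exact: continuous_dsubmx'].
Qed.

Lemma is_diff_piP {R : realType} {p z : nat} xt : is_diff xt (@piP R p z) (@piP R p z).
Proof.
apply: is_diff_linfun; last exact: continuous_piP.
move=> a u v; rewrite /piP /=; congr (_, _); by rewrite linearP.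
Qed.

Lemma is_diff_rhoZ {R : realType} {p z : nat} xt : is_diff xt (@rhoZ R p z) (@rhoZ R p z).
Proof.
apply: is_diff_linfun; last exact: continuous_rhoZ.
move=> a u v; rewrite /rhoZ /=; by rewrite linearP.
Qed.

Definition Eerr {R : realType} {p z : nat} (k : 'cV[R]_p -> R -> 'cV[R]_z)
  (xt : 'cV[R]_(p + z) * R) : 'cV[R]_z := rhoZ xt - uncurry2 k (piP xt).

Definition Dh1 {R : realType} {p z : nat} (sigma : R) (h : 'cV[R]_p -> R -> R)
  (k : 'cV[R]_p -> R -> 'cV[R]_z) (xt d : 'cV[R]_(p + z) * R) : R :=
  'd (uncurry2 h) (piP xt) (piP d) - 1 / (2 * sigma) *
    \sum_(i < z) (2 * (Eerr k xt i 0 * (rhoZ d - 'd (uncurry2 k) (piP xt) (piP d)) i 0)).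

Lemma is_diff_h1 (R : realType) (p z : nat) (sigma : R) (h : 'cV[R]_p -> R -> R)
  (k : 'cV[R]_p -> R -> 'cV[R]_z) (xt : 'cV[R]_(p + z) * R) :
  differentiable (uncurry2 h) (piP xt) -> differentiable (uncurry2 k) (piP xt) ->
  is_diff xt (uncurry2 (h1 sigma h k)) (Dh1 sigma h k xt).
Proof.
move=> dH dK.
have HH : is_diff (piP xt) (uncurry2 h) ('d (uncurry2 h) (piP xt)) by apply: DiffDef.
have HK : is_diff (piP xt) (uncurry2 k) ('d (uncurry2 k) (piP xt)) by apply: DiffDef.
have H1 := is_diff_comp (is_diff_piP xt) HH.
have H2 := is_diff_comp (is_diff_piP xt) HK.
have H3 := is_diffB (is_diff_rhoZ xt) H2.
have H4 := @is_diff_sqnorm _ _ _ _ _ _ H3.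
have H5 := is_diffZ (1 / (2 * sigma)) H4.
have H6 := is_diffB H1 H5.
eapply is_diff_ext; first exact: H6.
  by apply/funext => y.
by apply/funext => y.
Qed.

Lemma cvg_within_map {T U : topologicalType} (A : set T) (B : set U) (g : T -> U) (x : T) :
  {for x, continuous g} -> (forall y, A y -> B (g y)) ->
  g @ within A (nbhs x) --> within B (nbhs (g x)).
Proof.
move=> cg AB S HS.
have := cg _ HS.
rewrite /within /= !nbhs_simpl /=.
apply: filterS => y /= H Ay; exact: H (AB _ Ay).
Qed.

Lemma cvg_sum_ord (R : realType) T (F : set_system T) {FF : Filter F} n
  (f : 'I_n -> T -> R) (a : 'I_n -> R) :
  (forall i, f i x @[x --> F] --> a i) ->
  \sum_(i < n) f i x @[x --> F] --> \sum_(i < n) a i.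
Proof.
move=> Hf; apply: cvg_big => //; exact: add_continuous.
Qed.

Lemma C1_h1 (R : realType) (p z : nat) (sigma : R) (h : 'cV[R]_p -> R -> R)
  (k : 'cV[R]_p -> R -> 'cV[R]_z) t0 tf :
  C1_on t0 tf h -> C1_on t0 tf k -> C1_on t0 tf (h1 sigma h k).
Proof.
move=> [dH cH] [dK cK]; split.
  move=> x t Ht.
  have := @is_diff_h1 _ _ _ sigma _ _ (x, t) (dH (usubmx x) t Ht) (dK (usubmx x) t Ht).
  by move=> Hd; apply: ex_diff.
move=> w s.
set A := [set xt : 'cV[R]_(p + z) * R | in_time t0 tf xt.2].
apply: (@subspace_eq_continuous _ A _ (fun xt => Dh1 sigma h k xt (w, s))).
  move=> [x t] /[!inE] Axt.
  have Hd := @is_diff_h1 _ _ _ sigma _ _ (x, t) (dH (usubmx x) t Axt) (dK (usubmx x) t Axt).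
  by rewrite /from_subspace diff_val.
apply/subspace_continuousP => xt Axt.
set B := [set yt : 'cV[R]_p * R | in_time t0 tf yt.2].
have HpiP : piP @ within A (nbhs xt) --> within B (nbhs (piP xt)).
  apply: cvg_within_map; first exact: continuous_piP.
  by [].
rewrite /Dh1; apply: cvgB.
  have := cH (usubmx w) s.
  move/subspace_continuousP => /(_ (piP xt) Axt) Hc.
  exact: (cvg_comp _ _ HpiP Hc).
apply: cvgM; first exact: cvg_cst.
apply: cvg_sum_ord => i.
apply: cvgM; first exact: cvg_cst.
apply: cvgM.
  apply: cvg_within_filter.
  have HE : {for xt, continuous (Eerr k)}.
    apply: cvgB; first exact: continuous_rhoZ.
    apply: continuous_comp; first exact: continuous_piP.
    exact/differentiable_continuous/dK.
  exact: (cvg_comp _ _ HE (@coord_continuous _ _ _ i 0 (Eerr k xt))).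
have := cK (usubmx w) s.
move/subspace_continuousP => /(_ (piP xt) Axt) Hc.
have Hc2 := cvg_comp _ _ HpiP Hc.
have Hc3 := cvgB (cvg_cst (rhoZ (w, s))) Hc2.
have WF : Filter (within A (nbhs xt)) by exact: within_filter.
have {}Hc3 := Hc3 WF WF.
have H4 := cvg_comp _ _ Hc3 (@coord_continuous _ _ _ i 0 _).
exact: H4.
Qed.

Lemma sqnorm_ge0 (R : realType) n (v : 'cV[R]_n) : 0 <= sqnorm v.
Proof. by apply: sumr_ge0 => i _; exact: sqr_ge0. Qed.

Lemma sqnorm_eq0 (R : realType) n (v : 'cV[R]_n) : sqnorm v = 0 -> v = 0.
Proof.
move=> /eqP; rewrite psumr_eq0; last by move=> i _; exact: sqr_ge0.
move=> /allP H; apply/matrixP => i j; rewrite ord1 mxE.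
have := H i (mem_index_enum i); rewrite /= sqrf_eq0 => /eqP ->. done.
Qed.

Lemma sqnorm0 (R : realType) n : sqnorm (0 : 'cV[R]_n) = 0.
Proof. by apply: big1 => i _; rewrite mxE expr0n. Qed.

Lemma dot_trmx (R : realType) n (a b : 'cV[R]_n) :
  \sum_(i < n) a i 0 * b i 0 = (a^T *m b) 0 0.
Proof. by rewrite mxE; apply: eq_bigr => i _; rewrite mxE. Qed.

Lemma choose_lambda (R : realType) (A S1 Q M sigma : R) :
  0 < sigma -> 0 < Q ->
  M < A - 1 / (2 * sigma) * (2 * S1 + 2 * (((sigma * (A - M) - S1) / Q - 1) * Q)).
Proof.
move=> hs hQ.
have -> : A - 1 / (2 * sigma) * (2 * S1 + 2 * (((sigma * (A - M) - S1) / Q - 1) * Q))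
  = M + Q / sigma.
  by field; rewrite ?gt_eqF.
by rewrite ltrDl divr_gt0.
Qed.

Lemma d_h1 (R : realType) (p z : nat) (sigma : R) (h : 'cV[R]_p -> R -> R)
  (k : 'cV[R]_p -> R -> 'cV[R]_z) t0 tf x t :
  C1_on t0 tf h -> C1_on t0 tf k -> in_time t0 tf t ->
  forall d, 'd (uncurry2 (h1 sigma h k)) (x, t) d = Dh1 sigma h k (x, t) d.
Proof.
move=> [dH _] [dK _] Ht d.
have Hd := @is_diff_h1 _ _ _ sigma _ _ (x, t) (dH (usubmx x) t Ht) (dK (usubmx x) t Ht).
by rewrite diff_val.
Qed.

Lemma Dh1E (R : realType) (p z : nat) (sigma : R) (h : 'cV[R]_p -> R -> R)
  (k : 'cV[R]_p -> R -> 'cV[R]_z) x t (w : 'cV[R]_(p + z)) s :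
  Dh1 sigma h k (x, t) (w, s) =
  'd (uncurry2 h) (usubmx x, t) (usubmx w, s) - 1 / (2 * sigma) *
    \sum_(i < z) (2 * ((dsubmx x - k (usubmx x) t) i 0 *
       (dsubmx w - 'd (uncurry2 k) (usubmx x, t) (usubmx w, s)) i 0)).
Proof. by []. Qed.
Theorem mainTheorem2 (R : realType) (p z m : nat)
  (f : 'cV[R]_p -> 'cV[R]_p) (G : 'cV[R]_p -> 'M[R]_(p, z))
  (f1 : 'cV[R]_p -> 'cV[R]_z -> 'cV[R]_z) (G1 : 'cV[R]_p -> 'cV[R]_z -> 'M[R]_(z, m))
  (Hf : loc_lipschitz f) (HG : loc_lipschitz G)
  (HGrk : forall x, row_free (G x))
  (Hf1 : loc_lipschitz (fun pz : 'cV[R]_p * 'cV[R]_z => f1 pz.1 pz.2))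
  (HG1 : loc_lipschitz (fun pz : 'cV[R]_p * 'cV[R]_z => G1 pz.1 pz.2))
  (HG1rk : forall x y, row_free (G1 x y))
  (t0 : R) (tf : \bar R)
  (h : 'cV[R]_p -> R -> R) (D : R -> set 'cV[R]_p) (alpha : R -> R)
  (Hh : is_CBF f G t0 tf h D alpha)
  (k : 'cV[R]_p -> R -> 'cV[R]_z) (Hk : C1_on t0 tf k)
  (Hhk : forall x t, graph t0 tf D (x, t) -> - alpha (h x t) < hdot f G h x t (k x t))
  (sigma : R) (Hsigma : 0 < sigma)
  (alpha1 : R -> R) (Halpha1 : ext_classKinf alpha1)
  (Halpha1ge : forall s, alpha s <= alpha1 s) :
  exists D1 : R -> set 'cV[R]_(p + z),
    is_CBF (F2 f G f1) (B2 G1) t0 tf (h1 sigma h k) D1 alpha1.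
Proof.
have Hh' := Hh.
case: Hh' => [C1h [Hgrad [Hsafe [Halpha Hsup]]]].
have Hc : 0 < 1 / (2 * sigma) by rewrite divr_gt0 // mulr_gt0.
exists (fun t => [set x : 'cV[R]_(p + z) | D t (usubmx x)]).
split; first exact: C1_h1.
split.
  move=> x t Ht H0.
  have [E0|E0] := eqVneq (dsubmx x - k (usubmx x) t) 0.
    have hz : h (usubmx x) t = 0.
      by move: H0; rewrite /h1 E0 sqnorm0 mulr0 subr0.
    have [w0 Hw0] := Hgrad _ _ Ht hz.
    exists (col_mx w0 0).
    rewrite /dhdx (@d_h1 _ _ _ sigma h k t0 tf x t C1h Hk Ht) Dh1E col_mxKu E0 big1 ?mulr0 ?subr0 //.
    by move=> i _; rewrite mxE mul0r mulr0.
  exists (col_mx 0 (dsubmx x - k (usubmx x) t)).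
  rewrite /dhdx (@d_h1 _ _ _ sigma h k t0 tf x t C1h Hk Ht) Dh1E col_mxKu col_mxKd.
  set E := dsubmx x - k (usubmx x) t.
  have -> : (0 : 'cV[R]_p, 0 : R) = 0 by [].
  rewrite !linear0 addr0 sub0r -mulr_sumr.
  have -> : \sum_(i < z) E i 0 * E i 0 = sqnorm E.
    by apply: eq_bigr => i _; rewrite expr2.
  rewrite oppr_eq0 !mulf_neq0 ?gt_eqF ?invr_gt0 ?mulr_gt0 //.
  rewrite lt_neqAle sqnorm_ge0 andbT eq_sym.
  by apply/eqP => /sqnorm_eq0; apply/eqP.
split.
  move=> t Ht x; rewrite /safe_set /= /h1 => H0.
  apply: (Hsafe t Ht); rewrite /safe_set /=.
  have := mulr_ge0 (ltW Hc) (@sqnorm_ge0 _ _ (dsubmx x - k (usubmx x) t)).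
  move: H0; set a := 1 / (2 * sigma) * _; lra.
split; first exact: Halpha1.
move=> x t [/= Ht HD].
set M := - alpha1 (h1 sigma h k x t).
suff [u Hu] : exists u, M < hdot (F2 f G f1) (B2 G1) (h1 sigma h k) x t u.
  apply: (@lt_le_trans _ _ (hdot (F2 f G f1) (B2 G1) (h1 sigma h k) x t u)%:E).
    by rewrite lte_fin.
  by apply: ereal_sup_ubound; exists u.
have pairE : forall (n : nat) (v : 'cV[R]_n), ((v, 0) + (0, 1) : 'cV[R]_n * R) = (v, 1).
  by move=> n v; congr (_, _); [exact: addr0 | exact: add0r].
have Hhd : forall u, hdot (F2 f G f1) (B2 G1) (h1 sigma h k) x t u =
    Dh1 sigma h k (x, t) (F2 f G f1 x + B2 G1 x *m u, 1).
  move=> u; rewrite /hdot /dhdx /dhdt -linearD pairE.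
  exact: (@d_h1 _ _ _ sigma h k t0 tf x t C1h Hk Ht).
have Hu : forall u, usubmx (F2 f G f1 x + B2 G1 x *m u) =
    f (usubmx x) + G (usubmx x) *m dsubmx x.
  by move=> u; rewrite /F2 /B2 mul_col_mx mul0mx add_col_mx addr0 col_mxKu.
have Hd : forall u, dsubmx (F2 f G f1 x + B2 G1 x *m u) =
    f1 (usubmx x) (dsubmx x) + G1 (usubmx x) (dsubmx x) *m u.
  by move=> u; rewrite /F2 /B2 mul_col_mx mul0mx add_col_mx addr0 col_mxKd.
have [E0|E0] := eqVneq (dsubmx x - k (usubmx x) t) 0.
  have ZE : dsubmx x = k (usubmx x) t by apply/eqP; rewrite -subr_eq0 E0.
  exists 0; rewrite Hhd Dh1E Hu E0 big1; last first.
    by move=> i _; rewrite mxE mul0r mulr0.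
  rewrite mulr0 subr0 /M /h1 E0 sqnorm0 mulr0 subr0.
  have := Hhk (usubmx x) t (conj Ht HD).
  rewrite /hdot /dhdx /dhdt -linearD pairE -ZE.
  have := Halpha1ge (h (usubmx x) t).
  lra.
set E := dsubmx x - k (usubmx x) t.
set q := E^T *m G1 (usubmx x) (dsubmx x).
have qn0 : q^T != 0.
  apply/eqP => /(congr1 trmx); rewrite trmxK trmx0 => q0.
  have : E^T *m G1 (usubmx x) (dsubmx x) = 0 *m G1 (usubmx x) (dsubmx x).
    by rewrite mul0mx.
  move/(row_free_inj (HG1rk _ _)) => /(congr1 trmx); rewrite trmxK trmx0 => E00.
  by move: E0; rewrite -/E E00 eqxx.
set Q := (q *m q^T) 0 0.
have QE : Q = sqnorm q^T.
  by rewrite /Q mxE; apply: eq_bigr => j _; rewrite expr2 !mxE.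
have Qpos : 0 < Q.
  rewrite QE lt_neqAle sqnorm_ge0 andbT eq_sym.
  by apply/eqP => /sqnorm_eq0; apply/eqP.
set A := 'd (uncurry2 h) (usubmx x, t) (f (usubmx x) + G (usubmx x) *m dsubmx x, 1).
set Kd := 'd (uncurry2 k) (usubmx x, t) (f (usubmx x) + G (usubmx x) *m dsubmx x, 1).
set S1 := \sum_(i < z) E i 0 * (f1 (usubmx x) (dsubmx x) - Kd) i 0.
set lam := (sigma * (A - M) - S1) / Q - 1.
exists (lam *: q^T).
rewrite Hhd Dh1E Hu Hd -/E -/A -/Kd.
have -> : \sum_(i < z) 2 * (E i 0 *
      (f1 (usubmx x) (dsubmx x) + G1 (usubmx x) (dsubmx x) *m (lam *: q^T) - Kd) i 0)
    = 2 * S1 + 2 * (lam * Q).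
  rewrite (eq_bigr (fun i => 2 * (E i 0 * (f1 (usubmx x) (dsubmx x) - Kd) i 0) +
       2 * (E i 0 * (G1 (usubmx x) (dsubmx x) *m (lam *: q^T)) i 0))); last first.
    by move=> i _; rewrite !mxE; ring.
  rewrite big_split /= -!mulr_sumr; congr (_ + 2 * _).
  by rewrite dot_trmx mulmxA -/q -scalemxAr mxE.
exact: choose_lambda.
Qed.
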